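(* Let $W=I_2(m)$, $m\ge3$. Writing $X^{(m)}_{\alpha\ldots}=\sum_{w\in W}q_w\delta_w$ with $q_w\in\mathcal{Q}$, the coefficient $c^{(m-3)}_{\beta,\alpha}$ of $\delta^{(m-3)}_{\beta\ldots}$ equals $$c^{(m-3)}_{\beta,\alpha}=\begin{cases}-\,y_\alpha\,\upsilon^{(3)}_\beta\big\{S^{(0,m-3)}_\beta(y_\alpha y_\beta)+s_\alpha(y_\alpha y_\beta)\big\},& m\text{ even},\\ \ \ \,y_\alpha\,\upsilon^{(3)}_\beta\big\{S^{(0,m-3)}_\beta(y_\alpha y_\beta)+s_\alpha(y_\alpha y_\beta)\big\},& m\text{ odd}.\end{cases}$$ Symmetrically, the coefficient $c^{(m-3)}_{\alpha,\beta}$ of $\delta^{(m-3)}_{\alpha\ldots}$ in $X^{(m)}_{\beta\ldots}$ is given by the same formula with $\alpha$ and $\beta$ interchanged.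
   Context: General setup: $W$ a finite real reflection group with root system $\Sigma$; $R$ an integral domain containing the ring $\mathcal{R}\subset\mathbb{R}$ generated by the coefficients of roots in the basis of simple roots; $F$ a one-dimensional commutative formal group law over $R$; $\mathcal{S}$ the formal root algebra (the quotient of the completed polynomial ring $R[[x_\lambda:\lambda\in\Lambda]]$, $\Lambda$ the lattice spanned by $\mathcal{R}$-multiples of roots, by the closed ideal generated by $x_0$ and the relations $x_{e_i\gamma+e_j\gamma'}=(e_ix_\gamma)+_F(e_jx_{\gamma'})$ for roots $\gamma,\gamma'$ and a fixed $\mathbb{Z}$-basis $(e_1=1,\dots,e_l)$ of $\mathcal{R}$), with $W$ acting by $w(x_\lambda)=x_{w(\lambda)}$; $\mathcal{Q}$ its localization at all $x_\gamma$; $\mathcal{Q}_W=\mathcal{Q}\otimes_RR[W]$ with left $\mathcal{Q}$-basis $\{\delta_w\}$ and product $(q\delta_w)(q'\delta_{w'})=q\,w(q')\delta_{ww'}$, $\mathbf 1=\delta_1$; $\delta_\gamma=\delta_{s_\gamma}$, $X_\gamma=\frac1{x_\gamma}(\mathbf 1-\delta_\gamma)$. Dihedral notation: $W=I_2(m)$, simple roots $\alpha,\beta$; $y_\gamma=1/x_\gamma\in\mathcal{Q}$; $W$ acts on products multiplicatively, $s(y_\gamma)=y_{s(\gamma)}$. $X^{(i)}_{\alpha\ldots}=X_\alpha X_\beta X_\alpha\cdots$ ($i$ alternating factors), $X^{(i)}_{\beta\ldots}$, $\delta^{(i)}_{\alpha\ldots}=\delta_\alpha\delta_\beta\cdots$,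 $\delta^{(i)}_{\beta\ldots}$, $s^{(i)}_{\alpha\ldots}=s_\alpha s_\beta\cdots$, $s^{(i)}_{\beta\ldots}$ ($i$ factors; $i=0$ gives $\mathbf 1$ / identity). $\omega_j=\alpha$ for $j$ even, $\omega_j=\beta$ for $j$ odd. For $0\le i\le m-1$: $\upsilon^{(i)}_\alpha=\prod_{j=0}^{m-i-1}s^{(j)}_{\alpha\ldots}(y_{\omega_j})$ and $\upsilon^{(i)}_\beta=\prod_{j=0}^{m-i-1}s^{(j)}_{\beta\ldots}(y_{\omega_{j+1}})$ (empty product $=1$). For $i\le j$: $S^{(i,j)}_\alpha(u)=\sum_{k=i}^js^{(k)}_{\alpha\ldots}(u)$, $S^{(i,j)}_\beta(u)=\sum_{k=i}^js^{(k)}_{\beta\ldots}(u)$; an empty range gives $0$. *)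

(* Defs.v *)
From HB Require Import structures.
From mathcomp Require Import all_boot all_order all_algebra all_fingroup.
Set Implicit Arguments. Unset Strict Implicit. Unset Printing Implicit Defensive.
Import GRing.Theory.
Local Open Scope ring_scope.

(* Roots are the 2m unit vectors at angles k*pi/m, k in Z/2m; we index the   *)
(* root at angle k*pi/m by k : 'Z_(2m).  The simple roots are               *)
(*   alpha = root 0   (angle 0),                                             *)
(*   beta  = root (m-1)  (angle pi - pi/m),                                  *)
(* so that the angle between alpha and beta is pi - pi/m.                    *)
(* The reflection s_gamma in the line orthogonal to the root of index a maps *)
(* the angle phi to 2 a pi/m + pi - phi, i.e. index r to 2a + m - r.         *)

Definition rootI2 (m : nat) := 'Z_(m.*2).

Definition ralpha (m : nat) : rootI2 m := 0.
Definition rbeta (m : nat) : rootI2 m := (m.-1)%:R.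

Definition refl_fun (m : nat) (a : rootI2 m) (r : rootI2 m) : rootI2 m :=
  a *+ 2 + m%:R - r.

Lemma refl_fun_inj (m : nat) (a : rootI2 m) : injective (refl_fun a).
Proof. by move=> r1 r2; rewrite /refl_fun => /addrI /oppr_inj. Qed.

Definition sref (m : nat) (a : rootI2 m) : {perm rootI2 m} := perm (@refl_fun_inj m a).

(* Composition of Weyl group elements in the paper's convention:           *)
(* wcomp u v = u o v  (first v, then u).  Note that mathcomp's product of   *)
(* permutations is (v * u) x = u (v x).                                      *)
Definition wcomp (m : nat) (u v : {perm rootI2 m}) : {perm rootI2 m} := (v * u)%g.

(* The Weyl group W = I_2(m), realised (faithfully) as the group of          *)
(* permutations of the roots generated by the simple reflections.            *)
Definition Wgrp (m : nat) : {set {perm rootI2 m}} :=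
  <<[set sref (ralpha m); sref (rbeta m)]>>%g.

Definition altw (T : Type) (a b : T) (i : nat) : seq T :=
  mkseq (fun j => if odd j then b else a) i.

(* s^{(i)}_{a...} = s_a s_b s_a ...  (i factors) *)
Definition sword (m : nat) (a b : rootI2 m) (i : nat) : {perm rootI2 m} :=
  foldr (@wcomp m) 1%g (map (@sref m) (altw a b i)).

(* The twisted group algebra Q_W = Q (x) R[W], elements sum_w q_w delta_w,   *)
(* represented by their coefficient functions (supported on W).             *)
(* (q delta_u)(q' delta_v) = q u(q') delta_{uv}.                            *)

Section TwistedGroupAlgebra.
Variables (m : nat) (Q : comUnitRingType)
          (act : {perm rootI2 m} -> {rmorphism Q -> Q}).

Definition QW := {ffun {perm rootI2 m} -> Q}.

Definition qw_delta (w : {perm rootI2 m}) : QW := [ffun u => (u == w)%:R].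

Definition qw_scale (q : Q) (A : QW) : QW := [ffun u => q * A u].

Definition qw_add (A B : QW) : QW := [ffun u => A u + B u].

Definition qw_opp (A : QW) : QW := [ffun u => - A u].

Definition qw_mul (A B : QW) : QW :=
  [ffun w => \sum_(u : {perm rootI2 m}) \sum_(v : {perm rootI2 m} | wcomp u v == w)
               A u * act u (B v)].

Definition qw_coef (A : QW) (w : {perm rootI2 m}) : Q := A w.

Variable x : rootI2 m -> Q.

Definition yr (k : rootI2 m) : Q := (x k)^-1.

Definition Xop (k : rootI2 m) : QW :=
  qw_scale (yr k) (qw_add (qw_delta 1%g) (qw_opp (qw_delta (sref k)))).

(* X^{(i)}_{a...} = X_a X_b X_a ...  (i factors) *)
Definition Xword (a b : rootI2 m) (i : nat) : QW :=
  foldr qw_mul (qw_delta 1%g) (map Xop (altw a b i)).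

(* upsilon^{(i)}: for (a,b) = (alpha,beta) this is
     upsilon^{(i)}_alpha = prod_{j=0}^{m-i-1} s^{(j)}_{alpha...}(y_{omega_j}),
   for (a,b) = (beta,alpha) it is
     upsilon^{(i)}_beta  = prod_{j=0}^{m-i-1} s^{(j)}_{beta...}(y_{omega_{j+1}}),
   where omega_j = alpha for j even, beta for j odd. *)
Definition ups (a b : rootI2 m) (i : nat) : Q :=
  \prod_(0 <= j < m - i) act (sword a b j) (yr (if odd j then b else a)).

(* S^{(i,j)}_a(u) = sum_{k=i}^{j} s^{(k)}_{a...}(u)  (empty if j < i) *)
Definition Ssum (a b : rootI2 m) (i j : nat) (u : Q) : Q :=
  \sum_(i <= k < j.+1) act (sword a b k) u.

End TwistedGroupAlgebra.

(* Main.v *)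
Require Import Defs.
From HB Require Import structures.
From mathcomp Require Import all_boot all_order all_algebra all_fingroup.
From mathcomp Require Import ring zify.
Set Implicit Arguments. Unset Strict Implicit. Unset Printing Implicit Defensive.
Import GRing.Theory.
Local Open Scope ring_scope.

Lemma altwS T (a b:T) n : altw a b n.+1 = a :: altw b a n.
Proof.
rewrite /altw /mkseq /= (_ : iota 1 n = map (addn 1) (iota 0 n)); last by rewrite -iotaDl.
rewrite -map_comp; congr (_ :: _); apply: eq_map => j /=; by case: (odd j).
Qed.

Lemma swordS m (a b : rootI2 m) n : sword a b n.+1 = wcomp (sref a) (sword b a n).
Proof. by rewrite /sword altwS. Qed.

Lemma Z2m m (hm : (0 < m)%N) : (m%:R : rootI2 m) *+ 2 = 0.
Proof.
have h : (1 < m.*2)%N by rewrite -addnn; lia.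
by rewrite mulr2n -natrD addnn -(Zp_nat_mod h) modnn.
Qed.

Lemma sw_eval m (hm : (0 < m)%N) j r :
  sword (ralpha m) (rbeta m) j r = (if odd j then m%:R + j%:R - 1 - r else r + j%:R)
  /\ sword (rbeta m) (ralpha m) j r = (if odd j then m%:R - 1 - j%:R - r else r - j%:R).
Proof.
have Hb : rbeta m = m%:R - 1 by rewrite /rbeta; apply: (addIr 1); rewrite subrK natr1 (prednK hm).
have Z := Z2m hm.
elim: j => [|j [IH1 IH2]]; first by rewrite /sword /= perm1 addr0 subr0.
rewrite !swordS /wcomp !permM IH1 IH2 !permE /refl_fun /= Hb /ralpha -natr1.
case: (odd j) => /=.
  split; [ring | rewrite -[RHS]addr0 -Z; ring].
split; [ring | rewrite -[RHS]addr0 -Z; ring].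
Qed.

Lemma lin_eq (R : zmodType) (A B C D : R) : A = B -> C - D = A - B -> C = D.
Proof. by move=> -> /eqP; rewrite subrr subr_eq0 => /eqP. Qed.
Lemma lin_eq' (R : zmodType) (A B C D : R) : A = B -> C - D = B - A -> C = D.
Proof. by move=> -> /eqP; rewrite subrr subr_eq0 => /eqP. Qed.
Lemma lin2 (R : zmodType) (A0 B0 A1 B1 C D : R) : A0 = B0 -> A1 = B1 ->
  C - D = (A1 - B1) - (A0 - B0) -> C = D.
Proof. by move=> -> -> /eqP; rewrite !subrr ?subr0 subr_eq0 => /eqP. Qed.
Lemma lin2' (R : zmodType) (A0 B0 A1 B1 C D : R) : A0 = B0 -> A1 = B1 ->
  C - D = (A0 - B0) - (A1 - B1) -> C = D.
Proof. by move=> -> -> /eqP; rewrite !subrr ?subr0 subr_eq0 => /eqP. Qed.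

Lemma valZ m (hm : (0 < m)%N) n : val (n%:R : rootI2 m) = (n %% m.*2)%N.
Proof. have h : (1 < m.*2)%N by rewrite -addnn; lia. exact: val_Zp_nat. Qed.

Lemma two_neq m (hm : (1 < m)%N) : (2%:R : rootI2 m) <> 0.
Proof.
move=> /(congr1 val); rewrite valZ; last lia.
rewrite modn_small /=; last by rewrite -addnn; lia.
by [].
Qed.

Lemma eqZ m (hm : (0 < m)%N) j k : (j <= m)%N -> (k <= m)%N ->
  (j%:R = k%:R :> rootI2 m) -> j = k.
Proof.
move=> hj hk /(congr1 val); rewrite !valZ // !modn_small //; rewrite -addnn; lia.
Qed.

Lemma eqZN m (hm : (0 < m)%N) j k : (j <= m)%N -> (k <= m)%N ->
  (j%:R = - k%:R :> rootI2 m) -> j = k /\ (j = 0 \/ j = m)%N.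
Proof.
move=> hj hk /eqP; rewrite -subr_eq0 opprK -natrD => /eqP /(congr1 val); rewrite valZ //=.
have [E|ne] := eqVneq (j + k)%N m.*2.
  by rewrite E modnn => _; move: E; rewrite -addnn; lia.
rewrite modn_small; first lia.
by move: ne; rewrite -addnn; lia.
Qed.

Ltac lin_solve E0 := first [apply: (lin_eq E0); ring | apply: (lin_eq' E0); ring].
Ltac par_solve hm E0 E1 := exfalso; apply: (two_neq hm);
  first [apply: (lin2 E0 E1); ring | apply: (lin2' E0 E1); ring].

Lemma sw_dist m (hm : (1 < m)%N) j k : (j <= m)%N -> (k <= m)%N ->
 [/\ sword (ralpha m) (rbeta m) j = sword (ralpha m) (rbeta m) k -> j = k,
     sword (rbeta m) (ralpha m) j = sword (rbeta m) (ralpha m) k -> j = k,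
     sword (ralpha m) (rbeta m) j = sword (rbeta m) (ralpha m) k -> j = k /\ (j = 0 \/ j = m)%N &
     sword (rbeta m) (ralpha m) j = sword (ralpha m) (rbeta m) k -> j = k /\ (j = 0 \/ j = m)%N].
Proof.
move=> hj hk; have h0 : (0 < m)%N by lia.
have ev := sw_eval h0.
split => E; have E0 := congr1 (fun P : {perm _} => P 0) E;
  have E1 := congr1 (fun P : {perm _} => P 1) E; simpl in E0, E1;
  rewrite ?(proj1 (ev _ _)) ?(proj2 (ev _ _)) in E0 E1;
  case: (odd j) in E0 E1; case: (odd k) in E0 E1;
  try (par_solve hm E0 E1);
  first [ apply: (eqZ h0) => //; lin_solve E0 | apply: (eqZN h0) => //; lin_solve E0 ].
Qed.
Lemma sref_inv m (a : rootI2 m) : wcomp (sref a) (sref a) = 1%g.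
Proof. apply/permP => r; rewrite /wcomp permM !permE /refl_fun; ring. Qed.

Lemma sref_invg m (a : rootI2 m) : ((sref a)^-1 = sref a)%g.
Proof. by apply: (mulgI (sref a)); rewrite mulgV -(sref_inv a). Qed.

Lemma sum_delta (T : finType) (R : pzRingType) (c : T) (F : T -> R) :
  \sum_u (u == c)%:R * F u = F c.
Proof.
rewrite (bigD1 c) //= eqxx mul1r big1 ?addr0 // => u /negbTE ->; by rewrite mul0r.
Qed.

Lemma Xop_mulE m (Q : comUnitRingType) (act : {perm rootI2 m} -> {rmorphism Q -> Q})
  (x : rootI2 m -> Q) (act1 : forall q, act 1%g q = q) k (C : QW m Q) w :
  qw_mul act (Xop x k) C w = yr x k * (C w - act (sref k) (C (wcomp (sref k) w))).
Proof.
rewrite /qw_mul ffunE.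
transitivity (\sum_u Xop x k u * act u (C (w * u^-1)%g)).
  apply: eq_bigr => u _; rewrite (big_pred1 (w * u^-1)%g) //.
  by move=> v; rewrite /wcomp /= (canF_eq (mulgK u)).
under eq_bigr => u _ do rewrite /Xop /qw_scale /qw_add /qw_opp /qw_delta !ffunE -mulrA mulrBl.
rewrite -mulr_sumr sumrB !sum_delta invg1 mulg1 act1 sref_invg.
by [].
Qed.

Lemma srefK m (a : rootI2 m) w : wcomp (sref a) (wcomp (sref a) w) = w.
Proof. by rewrite /wcomp -mulgA; have := sref_inv a; rewrite /wcomp => ->; rewrite mulg1. Qed.

Lemma XwordS m (Q : comUnitRingType) (act : {perm rootI2 m} -> {rmorphism Q -> Q})
  (x : rootI2 m -> Q) a b n :
  Xword act x a b n.+1 = qw_mul act (Xop x a) (Xword act x b a n).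
Proof. by rewrite /Xword altwS. Qed.

Lemma Xword_supp m (Q : comUnitRingType) (act : {perm rootI2 m} -> {rmorphism Q -> Q})
  (x : rootI2 m -> Q) (act1 : forall q, act 1%g q = q) n : forall a b w,
  (forall k, (k <= n)%N -> w != sword a b k) -> (forall k, (k < n)%N -> w != sword b a k) ->
  Xword act x a b n w = 0.
Proof.
elim: n => [|n IH] a b w H1 H2.
  by rewrite /Xword /= /qw_delta ffunE; have := H1 0%N isT; rewrite /sword /= => /negbTE ->.
rewrite XwordS Xop_mulE // !IH ?rmorph0 ?subrr ?mulr0 //.
- move=> k kn; apply/eqP => E; move: (H1 k.+1 kn); rewrite swordS -E srefK eqxx //.
- case=> [|k] kn; apply/eqP => E.
    by move: (H1 1%N isT); rewrite swordS (_ : sword b a 0 = sword a b 0) // -E srefK eqxx.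
  by move: (H2 k (leqW (ltnW kn))); rewrite -(srefK a w) E swordS srefK eqxx.
- by move=> k kn; first [apply: H1 | apply: H2]; lia.
Qed.

Section Main.
Variables (m : nat) (Q : comUnitRingType) (act : {perm rootI2 m} -> {rmorphism Q -> Q})
  (x : rootI2 m -> Q).
Hypothesis act1 : forall q, act 1%g q = q.
Hypothesis actM : forall u v, u \in Wgrp m -> v \in Wgrp m ->
              forall q, act (wcomp u v) q = act u (act v q).

Definition Pi (a b : rootI2 m) n : Q :=
  \prod_(0 <= j < n) act (sword a b j) (yr x (if odd j then b else a)).
Definition Sg (a b : rootI2 m) n (u : Q) : Q := \sum_(0 <= k < n) act (sword a b k) u.

Definition Dist (a b : rootI2 m) := forall j k, (j <= m)%N -> (k <= m)%N ->
  (sword a b j = sword a b k -> j = k) /\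
  (sword a b j = sword b a k -> j = k /\ (j = 0 \/ j = m)%N).

Definition Hyp a b := [/\ sref a \in Wgrp m, sref b \in Wgrp m, Dist a b & Dist b a].

Lemma HypC a b : Hyp a b -> Hyp b a.
Proof. by case. Qed.

Lemma sword_in a b : sref a \in Wgrp m -> sref b \in Wgrp m -> forall n,
  sword a b n \in Wgrp m /\ sword b a n \in Wgrp m.
Proof.
move=> Ha Hb; elim=> [|n [I1 I2]]; first by rewrite /sword /= group1.
by rewrite !swordS /wcomp !groupM.
Qed.

Lemma act_sw a b n q : Hyp a b ->
  act (sword a b n.+1) q = act (sref a) (act (sword b a n) q).
Proof.
case=> Ha Hb _ _; rewrite swordS actM //; by case: (sword_in Ha Hb n).
Qed.

Lemma actK a q : sref a \in Wgrp m -> act (sref a) (act (sref a) q) = q.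
Proof. by move=> Ha; rewrite -actM // sref_inv act1. Qed.

Lemma PiS a b n : Hyp a b -> Pi a b n.+1 = yr x a * act (sref a) (Pi b a n).
Proof.
move=> H; rewrite /Pi big_nat_recl // rmorph_prod /=.
congr (_ * _); first by rewrite /sword /= act1.
by apply: eq_bigr => j _; rewrite act_sw //=; case: (odd j).
Qed.

Lemma SgS a b n u : Hyp a b -> Sg a b n.+1 u = u + act (sref a) (Sg b a n u).
Proof.
move=> H; rewrite /Sg big_nat_recl // rmorph_sum /=.
congr (_ + _); first by rewrite /sword /= act1.
by apply: eq_bigr => j _; rewrite act_sw.
Qed.

Lemma Xrec a b n w : Xword act x a b n.+1 w =
  yr x a * (Xword act x b a n w - act (sref a) (Xword act x b a n (wcomp (sref a) w))).
Proof. by rewrite XwordS Xop_mulE. Qed.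

Lemma zeroS a b n : Hyp a b -> (n < m)%N -> Xword act x b a n (sword a b n.+1) = 0.
Proof.
case=> _ _ D _ hn; apply: Xword_supp => // k hk; apply/eqP => E.
  by have [_ /(_ E)] := D n.+1 k hn (leq_trans hk (ltnW hn)) => -[]; lia.
by have [/(_ E)] := D n.+1 k hn (leq_trans (ltnW hk) (ltnW hn)); lia.
Qed.

Lemma zero1 a b : Hyp a b -> (1 < m)%N -> Xword act x b a 1 (sword a b 1) = 0.
Proof.
case=> _ _ D _ hn; apply: Xword_supp => // k hk; apply/eqP => E.
  by have [_ /(_ E)] := D 1%N k (ltnW hn) (leq_trans hk (ltnW hn)) => -[]; lia.
by have [/(_ E)] := D 1%N k (ltnW hn) (leq_trans (ltnW hk) (ltnW hn)); lia.
Qed.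


Lemma actsign a k : act (sref a) ((-1) ^+ k) = (-1) ^+ k.
Proof. by rewrite rmorphXn rmorphN rmorph1. Qed.

Lemma Pform n : forall a b, Hyp a b -> (n <= m)%N ->
  Xword act x a b n (sword a b n) = (-1) ^+ n * Pi a b n.
Proof.
elim: n => [|n IH] a b H hn.
  by rewrite /Xword /= /qw_delta ffunE /sword /= /Pi big_geq // eqxx mulr1.
have Hba := HypC H; have hn' := ltnW hn.
rewrite Xrec {2}swordS srefK zeroS // IH // (PiS _ H).
rewrite rmorphM actsign exprS; ring.
Qed.

Lemma Q1form n a b : Hyp a b -> (n < m)%N ->
  Xword act x a b n.+1 (sword b a n) = yr x a * ((-1) ^+ n * Pi b a n).
Proof.
move=> H hn; have Hba := HypC H; have hn' := ltnW hn.
rewrite Xrec -swordS zeroS // Pform //.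
by rewrite rmorph0 subr0.
Qed.

Lemma Q2form n : forall a b, Hyp a b -> (n.+1 < m)%N ->
  Xword act x a b n.+2 (sword a b n) = (-1) ^+ n * (Pi a b n * Sg a b n.+1 (yr x a * yr x b)).
Proof.
elim: n => [|n IH] a b H hn; have Hba := HypC H; have hn' := ltnW hn.
  rewrite Xrec (_ : wcomp (sref a) (sword a b 0) = sword a b 1) ?swordS //.
  rewrite -swordS zero1 // (Q1form Hba) // (SgS _ _ H).
  rewrite /Pi /Sg !big_geq // rmorph0 subr0; ring.
rewrite Xrec {2}swordS srefK (Q1form Hba) // IH //.
rewrite (PiS _ H) (SgS _ _ H) [yr x b * yr x a]mulrC.
rewrite !rmorphM actsign !exprS; ring.
Qed.

Lemma Fform n k a b : k = n.+3 -> Hyp a b -> (n.+3 <= m)%N ->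
  Xword act x a b k (sword b a n) =
  (-1) ^+ n * (yr x a * Pi b a n * (Sg b a n.+1 (yr x a * yr x b) + act (sref a) (yr x a * yr x b))).
Proof.
move=> -> H hn; have Hba := HypC H; have hn' := ltnW hn; have hn'' := ltnW hn'.
rewrite Xrec -swordS (Q2form Hba) // (Q1form Hba) //.
rewrite (PiS _ H) [yr x b * yr x a]mulrC.
rewrite !rmorphM !actsign actK; last by case: H.
rewrite !exprS; ring.
Qed.

End Main.

Lemma HypAB m (hm : (1 < m)%N) :
  Hyp (ralpha m) (rbeta m).
Proof.
split.
- by apply: mem_gen; rewrite !inE eqxx.
- by apply: mem_gen; rewrite !inE eqxx orbT.
- by move=> j k hj hk; have [? ? ? ?] := sw_dist hm hj hk.
- by move=> j k hj hk; have [? ? ? ?] := sw_dist hm hj hk.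
Qed.

Lemma sign_m3 (Q : comUnitRingType) m (hm : (3 <= m)%N) (z : Q) :
  (-1) ^+ (m - 3) * z = if ~~ odd m then - z else z.
Proof.
rewrite -signr_odd oddB // /=; case: (odd m) => /=; by rewrite ?expr0 ?expr1 ?mul1r ?mulN1r.
Qed.

Unset Implicit Arguments.

Theorem lemma6p4 (m : nat) (hm : (3 <= m)%N) (Q : comUnitRingType)
    (act : {perm rootI2 m} -> {rmorphism Q -> Q}) (x : rootI2 m -> Q)
    (act1 : forall q, act 1%g q = q)
    (actM : forall u v, u \in Wgrp m -> v \in Wgrp m ->
              forall q, act (wcomp u v) q = act u (act v q))
    (actx : forall w, w \in Wgrp m -> forall k, act w (x k) = x (w k))
    (xunit : forall k, x k \is a GRing.unit) :
  let a := ralpha m in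
  let b := rbeta m in
  let y := yr x in
  qw_coef (Xword act x a b m) (sword b a (m - 3)) =
    (if ~~ odd m
     then - (y a * ups act x b a 3 *
               (Ssum act b a 0 (m - 3) (y a * y b) + act (sref a) (y a * y b)))
     else    y a * ups act x b a 3 *
               (Ssum act b a 0 (m - 3) (y a * y b) + act (sref a) (y a * y b)))
  /\
  qw_coef (Xword act x b a m) (sword a b (m - 3)) =
    (if ~~ odd m
     then - (y b * ups act x a b 3 *
               (Ssum act a b 0 (m - 3) (y b * y a) + act (sref b) (y b * y a)))
     else    y b * ups act x a b 3 *
               (Ssum act a b 0 (m - 3) (y b * y a) + act (sref b) (y b * y a))).
Proof.
move=> a b y.
have h1 : (1 < m)%N by lia.
have H := HypAB h1.
have e : m = (m - 3).+3 by lia.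
have hm' : ((m - 3).+2 < m)%N by lia.
split.
  by rewrite /qw_coef (Fform x act1 actM e H hm') sign_m3.
by rewrite /qw_coef (Fform x act1 actM e (HypC H) hm') sign_m3.
Qed.
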